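(* Let $(M,d)$ be a complete pointed metric space and $f\in\mathrm{Lip}_0(M,M)$ such that $\mathrm{int}(R_{\widehat f})\neq\emptyset$. Then there is no $\mu\in\mathcal F(M)\setminus\mathrm{span}(\delta(M))$ such that the sequence $(\widehat f^n(\mu))_n$ converges in norm to an element of $\mathrm{span}(\delta(M))$. In particular, $\widehat f$ is injective.
   Context: A pointed metric space is a metric space with a distinguished point $0$. $\mathrm{Lip}_0(M,M)$ denotes the Lipschitz maps $f:M\to M$ with $f(0)=0$; $\mathrm{Lip}_0(M)$ the real-valued Lipschitz functions vanishing at $0$ normed by the Lipschitz constant. $\delta:M\to\mathrm{Lip}_0(M)^*$, $\delta(x)(\varphi)=\varphi(x)$; $\mathcal F(M)$ is the norm-closed linear span of $\delta(M)$. $\widehat f$ is the unique bounded linear operator on $\mathcal F(M)$ with $\widehat f(\delta(x))=\delta(f(x))$. For an operator $T$, $R_T=\{\mu:\liminf_{n}\|T^n\mu-\mu\|=0\}$. *)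

(* Defs.v *)
From mathcomp Require Import all_boot all_order all_algebra.
From mathcomp Require Import all_classical all_reals all_analysis.
Set Implicit Arguments. Unset Strict Implicit. Unset Printing Implicit Defensive.
Import Order.TTheory GRing.Theory Num.Theory.
Import numFieldNormedType.Exports.
Local Open Scope classical_set_scope.
Local Open Scope ring_scope.

(* Elements of Lip_0(M)^* are represented as
   functionals (M -> R) -> R; only their values on Lip_0(M) matter. *)
Section Free.
Variables (R : realType) (M : Type) (d : M -> M -> R) (x0 : M).

Definition is_metric : Prop :=
  [/\ (forall x y, 0 <= d x y), (forall x y, d x y = 0 <-> x = y),
      (forall x y, d x y = d y x) & (forall x y z, d x z <= d x y + d y z)].

Definition complete_metric : Prop :=
  forall u : nat -> M,
    (forall e, 0 < e -> exists N, forall m n, (N <= m)%N -> (N <= n)%N ->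
        d (u m) (u n) < e) ->
    exists x, (fun n => d (u n) x) @ \oo --> (0 : R).

Definition lipschitz_fun (phi : M -> R) : Prop :=
  exists L : R, forall x y, `|phi x - phi y| <= L * d x y.

Definition Lip0 (phi : M -> R) : Prop := phi x0 = 0 /\ lipschitz_fun phi.

Definition lip_ball (phi : M -> R) : Prop :=
  Lip0 phi /\ forall x y, `|phi x - phi y| <= d x y.

Definition functional := (M -> R) -> R.

Definition in_Lip0_dual (mu : functional) : Prop :=
  (forall (a : R) phi psi, Lip0 phi -> Lip0 psi ->
      mu (fun x => a * phi x + psi x) = a * mu phi + mu psi) /\
  exists C : R, forall phi, lip_ball phi -> `|mu phi| <= C.

Definition dnorm (mu : functional) : R := sup [set `|mu phi| | phi in lip_ball].

Definition fsub (mu nu : functional) : functional := fun phi => mu phi - nu phi.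

Definition delta (x : M) : functional := fun phi => phi x.

Definition in_span_delta (mu : functional) : Prop :=
  exists s : seq (R * M), forall phi, Lip0 phi ->
    mu phi = \sum_(p <- s) p.1 * phi p.2.

(* mu \in F(M) : norm closure of span(delta(M)) in Lip_0(M)^* *)
Definition in_free (mu : functional) : Prop :=
  in_Lip0_dual mu /\
  forall e, 0 < e -> exists nu, in_span_delta nu /\ dnorm (fsub mu nu) < e.

Definition Lip0_map (f : M -> M) : Prop :=
  f x0 = x0 /\ exists L : R, forall x y, d (f x) (f y) <= L * d x y.

(* \hat f : the bounded linear operator with \hat f (delta x) = delta (f x),
   i.e. the restriction to F(M) of the adjoint of phi |-> phi \o f. *)
Definition fhat (f : M -> M) (mu : functional) : functional :=
  fun phi => mu (phi \o f).

Definition return_set (T : functional -> functional) : set functional :=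
  [set mu | in_free mu /\
     limn_einf (fun n => (dnorm (fsub (iter n T mu) mu))%:E) = 0%E].

Definition nonempty_interior (A : set functional) : Prop :=
  exists mu0, in_free mu0 /\ exists r : R, 0 < r /\
    forall nu, in_free nu -> dnorm (fsub nu mu0) < r -> A nu.

End Free.

(* Main.v *)
Require Import Defs.
From mathcomp Require Import all_boot all_order all_algebra.
From mathcomp Require Import all_classical all_reals all_analysis.
Import Order.TTheory GRing.Theory Num.Theory.
Import numFieldNormedType.Exports.
Local Open Scope classical_set_scope.
Local Open Scope ring_scope.
From mathcomp Require Import ring lra.
Set Implicit Arguments. Unset Strict Implicit. Unset Printing Implicit Defensive.

Section Basic.
Context (R : realType) (M : Type) (d : M -> M -> R) (x0 : M).
Hypothesis Hm : is_metric d.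

Definition bnd (rho : functional R M) := exists C : R, forall psi, lip_ball d x0 psi -> `|rho psi| <= C.
Definition linf (rho : functional R M) := forall (a : R) phi psi, Lip0 d x0 phi -> Lip0 d x0 psi ->
      rho (fun x => a * phi x + psi x) = a * rho phi + rho psi.

Lemma d_ge0 x y : 0 <= d x y. Proof. by case: Hm. Qed.
Lemma d_sym x y : d x y = d y x. Proof. by case: Hm. Qed.
Lemma d_xx x : d x x = 0. Proof. by case: Hm => _ H _ _; apply/H. Qed.

Lemma lip_ball0 : lip_ball d x0 (fun _ => 0).
Proof. split; first split => //; first by exists 0 => x y; rewrite subrr normr0 mul0r.
by move=> x y; rewrite subrr normr0 d_ge0. Qed.

Lemma dnorm_ub rho psi : bnd rho -> lip_ball d x0 psi -> `|rho psi| <= dnorm d x0 rho.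
Proof.
move=> [C HC] Hp; apply: sup_upper_bound; last by exists psi.
split; first by exists `|rho psi|, psi.
by exists C => _ [phi Hphi <-]; exact: HC.
Qed.

Lemma dnorm_le rho c : (forall psi, lip_ball d x0 psi -> `|rho psi| <= c) -> dnorm d x0 rho <= c.
Proof.
move=> H; apply: ge_sup; first by exists `|rho (fun _ => 0)|, (fun _ => 0) => //; exact: lip_ball0.
by move=> _ [phi Hphi <-]; exact: H.
Qed.

Lemma lin0 rho : linf rho -> rho (fun _ => 0) = 0.
Proof.
move=> H; have L0 : Lip0 d x0 (fun _ : M => (0:R)) by case: lip_ball0.
have := H 1 _ _ L0 L0; rewrite (_ : (fun x => 1 * 0 + 0) = (fun _ => 0)); last first.
  by apply: funext => x; rewrite mul1r addr0.
by rewrite mul1r; lra.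
Qed.

Lemma linZ rho a phi : linf rho -> Lip0 d x0 phi -> rho (fun x => a * phi x) = a * rho phi.
Proof.
move=> H Hp; have L0 : Lip0 d x0 (fun _ : M => (0:R)) by case: lip_ball0.
have := H a _ _ Hp L0; rewrite lin0 // addr0 => <-.
by congr rho; apply: funext => x; rewrite addr0.
Qed.

Definition lipb (psi : M -> R) c := forall x y, `|psi x - psi y| <= c * d x y.

Lemma lip_ball_lipb psi : lip_ball d x0 psi -> lipb psi 1.
Proof. by move=> [_ H] x y; rewrite mul1r. Qed.

Lemma scale_bound rho C chi c : linf rho -> (forall psi, lip_ball d x0 psi -> `|rho psi| <= C) ->
  Lip0 d x0 chi -> lipb chi c -> 0 < c -> `|rho chi| <= c * C.
Proof.
move=> Hl HC [Hc0 Hcl] Hb c0.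
have Hb' : lip_ball d x0 (fun x => c^-1 * chi x).
  split; first split; first by rewrite Hc0 mulr0.
    by exists 1 => x y; rewrite -mulrBr normrM gtr0_norm ?invr_gt0 // mul1r
      ler_pdivrMl // Hb.
  by move=> x y; rewrite -mulrBr normrM gtr0_norm ?invr_gt0 // ler_pdivrMl // Hb.
have := HC _ Hb'; rewrite linZ // normrM gtr0_norm ?invr_gt0 // ler_pdivrMl //.
Qed.

Lemma span_lin nu : in_span_delta d x0 nu -> linf nu.
Proof.
move=> [s Hs] a phi psi Hphi Hpsi.
have Hl : Lip0 d x0 (fun x => a * phi x + psi x).
  case: Hphi => p0 [L1 HL1]; case: Hpsi => q0 [L2 HL2]; split; first by rewrite p0 q0 mulr0 addr0.
  exists (`|a| * L1 + L2) => x y.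
  rewrite (_ : _ - _ = a * (phi x - phi y) + (psi x - psi y)); last by ring.
  rewrite (le_trans (ler_normD _ _)) // mulrDl lerD // normrM -mulrA ler_wpM2l //.
rewrite !Hs // mulr_sumr -big_split; apply: eq_bigr => p _ /=; ring.
Qed.

Lemma span_bnd nu : in_span_delta d x0 nu -> bnd nu.
Proof.
move=> [s Hs]; exists (\sum_(p <- s) `|p.1| * d p.2 x0) => psi Hp.
rewrite Hs; last by case: Hp.
rewrite (le_trans (ler_norm_sum _ _ _)) // ler_sum // => p _.
rewrite normrM ler_wpM2l //.
case: Hp => [[p0 _] H]; have := H p.2 x0; by rewrite p0 subr0.
Qed.

Lemma lip_ball_Lip0 psi : lip_ball d x0 psi -> Lip0 d x0 psi.
Proof. by case. Qed.

Lemma free_lin_bnd mu : in_free d x0 mu -> linf mu /\ bnd mu.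
Proof. by move=> [[H1 H2] _]. Qed.

Lemma bnd_comb mu nu c : bnd mu -> bnd nu -> bnd (fun psi => mu psi + c * nu psi).
Proof.
move=> [C1 H1] [C2 H2]; exists (C1 + `|c| * C2) => psi Hp.
by rewrite (le_trans (ler_normD _ _)) // lerD // ?H1 // normrM ler_wpM2l // H2.
Qed.

Lemma lin_comb mu nu c : linf mu -> linf nu -> linf (fun psi => mu psi + c * nu psi).
Proof. by move=> H1 H2 a phi psi Hp Hq; rewrite H1 // H2 //; ring. Qed.

Lemma fsubE (mu nu : functional R M) : fsub mu nu = (fun psi => mu psi + (-1) * nu psi).
Proof. by apply: funext => psi; rewrite /fsub mulN1r. Qed.

Lemma free_comb mu nu c : in_free d x0 mu -> in_free d x0 nu ->
  in_free d x0 (fun psi => mu psi + c * nu psi).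
Proof.
move=> Hmu Hnu; have [l1 b1] := free_lin_bnd Hmu; have [l2 b2] := free_lin_bnd Hnu.
split; first by split; [exact: lin_comb | exact: bnd_comb].
move=> e e0.
have e1 : 0 < e / 2 by lra.
have e2 : 0 < e / 2 / (`|c| + 1) by rewrite divr_gt0 // ltr_wpDl.
have [mu' [Hs1 Hd1]] := Hmu.2 _ e1.
have [nu' [Hs2 Hd2]] := Hnu.2 _ e2.
exists (fun psi => mu' psi + c * nu' psi); split.
  case: Hs1 => s1 H1; case: Hs2 => s2 H2.
  exists (s1 ++ [seq (c * p.1, p.2) | p <- s2]) => phi Hphi.
  rewrite H1 // H2 // big_cat /= big_map mulr_sumr; congr (_ + _).
  by apply: eq_bigr => p _; rewrite mulrA.
have bb1 : bnd (fsub mu mu') by rewrite fsubE; apply: bnd_comb => //; exact: span_bnd.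
have bb2 : bnd (fsub nu nu') by rewrite fsubE; apply: bnd_comb => //; exact: span_bnd.
apply: (le_lt_trans (y := dnorm d x0 (fsub mu mu') + `|c| * dnorm d x0 (fsub nu nu'))).
  apply: dnorm_le => psi Hp.
  rewrite /fsub (_ : _ - _ = (mu psi - mu' psi) + c * (nu psi - nu' psi)); last by ring.
  rewrite (le_trans (ler_normD _ _)) // lerD // ?(dnorm_ub bb1 Hp) //.
  by rewrite normrM ler_wpM2l // (dnorm_ub bb2 Hp).
have : `|c| * dnorm d x0 (fsub nu nu') <= `|c| * (e / 2 / (`|c| + 1)).
  by rewrite ler_wpM2l // ltW.
have : `|c| * (e / 2 / (`|c| + 1)) <= e / 2.
  rewrite mulrA ler_pdivrMr ?ltr_wpDl // mulrC ler_wpM2l; lra.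
lra.
Qed.

Lemma span_free nu : in_span_delta d x0 nu -> in_free d x0 nu.
Proof.
move=> Hs; split; first by split; [exact: span_lin | exact: span_bnd].
move=> e e0; exists nu; split => //; apply: (le_lt_trans _ e0); apply: dnorm_le => psi _.
by rewrite /fsub subrr normr0.
Qed.

End Basic.

Section Iter.
Context (R : realType) (M : Type) (d : M -> M -> R) (x0 : M) (f : M -> M).
Hypothesis Hm : is_metric d.
Hypothesis Hf : Lip0_map d x0 f.

Lemma iterT n (mu : functional R M) : iter n (fhat f) mu = fun psi => mu (psi \o iter n f).
Proof. by elim: n => //= n IH; rewrite /fhat IH. Qed.

Lemma iter_x0 n : iter n f x0 = x0.
Proof. by elim: n => //= n ->; case: Hf. Qed.

Lemma iter_lip : exists L : R, 1 <= L /\ forall n x y, d (iter n f x) (iter n f y) <= L ^+ n * d x y.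
Proof.
case: Hf => _ [L HL]; exists (`|L| + 1); split; first by rewrite lerDr.
elim => [|n IH] x y /=; first by rewrite expr0 mul1r.
rewrite (le_trans (HL _ _)) // exprS -mulrA.
rewrite (le_trans (y := `|L| * d (iter n f x) (iter n f y))) //.
  by rewrite ler_wpM2r ?(d_ge0 Hm) // ler_norm.
by rewrite ler_pM ?(d_ge0 Hm) // lerDl.
Qed.

Lemma Lip0_iter n psi : Lip0 d x0 psi -> Lip0 d x0 (psi \o iter n f).
Proof.
move=> [p0 [Lp HLp]]; have [L [L1 HL]] := iter_lip; split; first by rewrite /= iter_x0.
exists (`|Lp| * L ^+ n) => x y /=.
rewrite (le_trans (HLp _ _)) // (le_trans (y := `|Lp| * d (iter n f x) (iter n f y))) //.
  by rewrite ler_wpM2r ?(d_ge0 Hm) // ler_norm.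
by rewrite -mulrA ler_wpM2l.
Qed.

Lemma linf_iter n mu : linf d x0 mu -> linf d x0 (iter n (fhat f) mu).
Proof. move=> H a phi psi Hp Hq; rewrite iterT; apply: H; exact: Lip0_iter. Qed.

Lemma bnd_iter n mu : linf d x0 mu -> bnd d x0 mu -> bnd d x0 (iter n (fhat f) mu).
Proof.
move=> Hl [C HC]; have [L [L1 HL]] := iter_lip.
exists (L ^+ n * C) => psi Hp; rewrite iterT.
apply: (scale_bound Hm Hl HC); first by apply: Lip0_iter; case: Hp.
  move=> x y /=; rewrite (le_trans (lip_ball_lipb Hp _ _)) // mul1r HL //.
by rewrite exprn_gt0 // (lt_le_trans ltr01).
Qed.

End Iter.

Lemma einf0_recur (R : realType) (u : nat -> R) :
  limn_einf (fun n => (u n)%:E) = 0%E -> forall e, 0 < e -> forall N, exists n, (N <= n)%N /\ u n < e.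
Proof.
move=> H e e0 N; apply: contrapT => Hn.
have Hge : forall n, (N <= n)%N -> e <= u n.
  move=> n Nn; rewrite leNgt; apply/negP => He; apply: Hn; by exists n.
have : (e%:E <= limn_einf (fun n => (u n)%:E))%E.
  rewrite limn_einf_lim; apply: lime_ge; first exact: is_cvg_einfs.
  near=> m; apply: le_ereal_inf_tmp => _ [k /= mk <-]; rewrite lee_fin Hge //.
  apply: leq_trans mk; near: m; by exists N.
by rewrite H lee_fin; lra.
Unshelve. all: by end_near.
Qed.


Lemma cluster_pt (R : realType) N (K : R) (v : nat -> 'rV[R]_N) :
  (forall k i, `|v k ord0 i| <= K) ->
  exists p : 'rV[R]_N, forall eta, 0 < eta -> forall k0, exists k, (k0 <= k)%N /\
     forall i, `|p ord0 i - v k ord0 i| < eta.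
Proof.
move=> Hv.
have cA := @rV_compact R N (fun _ => `[-K, K]%classic) (fun _ => @segment_compact R _ _).
have FA : (v @ \oo) [set w : 'rV[R]_N | forall i, `[-K, K]%classic (w ord0 i)].
  rewrite /fmap /=; apply: filterE => k i /=; rewrite in_itv /= -ler_norml. exact: Hv.
have [p [_ Hp]] := cA _ _ FA.
exists p => eta eta0 k0.
have F2 : (v @ \oo) [set w | exists k, (k0 <= k)%N /\ w = v k].
  rewrite /fmap /=; near=> k; exists k; split => //; near: k; by exists k0.
have [w [[k [kk ->]] Hb]] := Hp _ _ F2 (nbhsx_ballx p eta eta0).
exists k; split => // i; case: Hb => _ /(_ ord0 i); by rewrite -ball_normE.
Unshelve. all: by end_near.
Qed.

Section Comb.
Context (R : realType) (N : nat) (a : 'I_N -> R).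

Definition msum (u : 'I_N -> R) p := \sum_(i | u i == p) a i.
Definition SS := [seq (\sum_(i in SS0) a i) | SS0 : {set 'I_N} <- enum {set 'I_N}].

Lemma msum_in u p : msum u p \in SS.
Proof.
apply/mapP; exists ([set i | u i == p]%SET); first by rewrite mem_enum.
by apply: eq_bigl => i; rewrite !inE.
Qed.

Lemma sep_list (L : seq R) p : exists rho, 0 < rho /\ forall x, x \in L -> x != p -> rho <= `|x - p|.
Proof.
elim: L => [|y L [r [r0 Hr]]]; first by exists 1.
case: (eqVneq y p) => [->|yp].
  exists r; split => // x; rewrite inE => /orP[/eqP -> /eqP//|]; exact: Hr.
exists (Num.min r `|y - p|); split; first by rewrite lt_min r0 normr_gt0 subr_eq0.
move=> x; rewrite inE => /orP[/eqP ->|xL xp]; first by rewrite ge_min lexx orbT.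
by rewrite ge_min Hr.
Qed.

Lemma regroup (u : 'I_N -> R) (U : seq R) : uniq U -> (forall i, u i \in U) ->
  \sum_i a i * u i = \sum_(p <- U) p * msum u p.
Proof.
move=> Uu Hu.
under [RHS]eq_bigr => p _ do rewrite /msum mulr_sumr big_mkcond /=.
rewrite exchange_big /=; apply: eq_bigr => i _.
rewrite (bigD1_seq (u i)) //= eqxx big1 ?addr0; first by rewrite mulrC.
by move=> q /negbTE qi; rewrite eq_sym qi.
Qed.

Lemma regroup_eq (u u' : 'I_N -> R) : (forall p, p != 0 -> msum u p = msum u' p) ->
  \sum_i a i * u i = \sum_i a i * u' i.
Proof.
move=> H; set U := undup ([seq u i | i <- enum 'I_N] ++ [seq u' i | i <- enum 'I_N]).
have HU : uniq U by exact: undup_uniq.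
have H1 i : u i \in U by rewrite mem_undup mem_cat map_f ?mem_enum.
have H2 i : u' i \in U by rewrite mem_undup mem_cat [X in _ || X]map_f ?mem_enum ?orbT.
rewrite (regroup HU H1) (regroup HU H2).
apply: eq_bigr => p _; case: (eqVneq p 0) => [->|p0]; first by rewrite !mul0r.
by rewrite H.
Qed.

Definition bump p rho (s : R) := (rho - `|s - p| + `|rho - `|s - p| |) / 2.

Lemma bump_lip p rho x y : `|bump p rho x - bump p rho y| <= `|x - y|.
Proof.
rewrite /bump.
have h1 := ler_dist_dist (x - p) (y - p).
have h2 := ler_dist_dist (rho - `|x - p|) (rho - `|y - p|).
rewrite (_ : x - p - (y - p) = x - y) in h1; last by ring.
rewrite (_ : rho - `|x - p| - (rho - `|y - p|) = - (`|x - p| - `|y - p|)) in h2; last by ring.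
rewrite normrN in h2.
move: h1 h2; set X := `|x - p|; set Y := `|y - p|; set P := `|rho - X|; set Q := `|rho - Y|.
set Z := `|x - y|.
move=> h1 h2; have h3 := h1; move: h1 h2.
rewrite !ler_norml => /andP[h1 h1'] /andP[h2 h2']; apply/andP; split; lra.
Qed.

Lemma bump_far p rho s : rho <= `|s - p| -> bump p rho s = 0.
Proof. by move=> H; rewrite /bump (@ler0_norm _ (rho - `|s - p|)) ?subr_le0 // addrN mul0r. Qed.

Lemma bump_at p rho : 0 < rho -> bump p rho p = rho.
Proof. by move=> r0; rewrite /bump subrr normr0 subr0 gtr0_norm //; lra. Qed.

Lemma bump_sum (u : 'I_N -> R) p rho : 0 < rho -> (forall i, u i != p -> rho <= `|u i - p|) ->
  \sum_i a i * bump p rho (u i) = rho * msum u p.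
Proof.
move=> r0 H; rewrite /msum mulr_sumr [RHS]big_mkcond /=; apply: eq_bigr => i _.
case: (eqVneq (u i) p) => [->|up]; first by rewrite bump_at // mulrC.
by rewrite bump_far ?mulr0 // H.
Qed.

Definition Hset (h : R -> R) := h 0 = 0 /\ forall x y, `|h x - h y| <= `|x - y|.

Lemma core (A B : (R -> R) -> R) eps : 0 < eps ->
  (forall t, 0 <= t -> t < eps -> exists v : 'I_N -> R, forall h, Hset h ->
      \sum_i a i * h (v i) = A h + t * B h) ->
  B id = 0.
Proof.
move=> e0 Hv; apply: contrapT => Bid.
have [v0 H0] := Hv 0 (lexx _) e0.
have t10 : 0 < eps / 2 by lra.
have [v1 H1] := Hv (eps / 2) (ltW t10) ltac:(lra).
have Hid : Hset id by split => // x y.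
have [p [p0 Hp]] : exists p, p != 0 /\ msum v1 p != msum v0 p.
  apply: contrapT => Hn; have E := regroup_eq (u := v1) (u' := v0).
  have : \sum_i a i * v1 i = \sum_i a i * v0 i.
    apply: E => p p0; apply: contrapT => Hne; apply: Hn; exists p; split => //; exact/eqP.
  rewrite (H1 id Hid) (H0 id Hid) mul0r addr0 => E2.
  have : eps / 2 * B id == 0 by apply/eqP; lra.
  by rewrite mulf_eq0 => /orP[] /eqP h; [lra | exact: Bid h].
pose beta := (msum v1 p - msum v0 p) / (eps / 2).
have beta0 : beta != 0 by rewrite mulf_neq0 ?invr_eq0 ?subr_eq0 //; lra.
pose D := [seq x - y | x <- SS, y <- SS].
have [del [del0 Hdel]] := sep_list D 0.
pose t := Num.min (eps / 2) (del / (2 * `|beta|)).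
have bpos : 0 < `|beta| by rewrite normr_gt0.
have t0 : 0 < t by rewrite lt_min t10 divr_gt0 // mulr_gt0.
have tle : t <= eps / 2 by rewrite ge_min lexx.
have [v Hvv] := Hv t (ltW t0) ltac:(lra).
pose L := 0 :: ([seq v0 i | i <- enum 'I_N] ++ [seq v1 i | i <- enum 'I_N] ++ [seq v i | i <- enum 'I_N]).
have [rho [r0 Hr]] := sep_list L p.
have inL0 i : v0 i \in L by rewrite inE mem_cat map_f ?mem_enum ?orbT.
have inL1 i : v1 i \in L by rewrite inE !mem_cat map_f ?mem_enum ?orbT.
have inL i : v i \in L by rewrite inE !mem_cat map_f ?mem_enum ?orbT.
have Hh : Hset (bump p rho).
  split; last exact: bump_lip.
  by apply: bump_far; apply: Hr; rewrite ?inE ?eqxx // eq_sym.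
have E0 := H0 _ Hh; have E1 := H1 _ Hh; have E := Hvv _ Hh.
rewrite bump_sum // in E0; last by move=> i; apply: Hr.
rewrite bump_sum // in E1; last by move=> i; apply: Hr.
rewrite bump_sum // in E; last by move=> i; apply: Hr.
rewrite mul0r addr0 in E0.
have Bh : B (bump p rho) = rho * beta.
  rewrite /beta; apply: (mulfI (x := eps / 2)); first by lra.
  have -> : eps / 2 * (rho * ((msum v1 p - msum v0 p) / (eps / 2))) =
    rho * msum v1 p - rho * msum v0 p by field; lra.
  rewrite E1 E0; ring.
have Ed : msum v p - msum v0 p = t * beta.
  apply: (mulfI (x := rho)); first by lra.
  rewrite mulrBr E E0 Bh; ring.
have inD : msum v p - msum v0 p \in D by apply/allpairsP; exists (msum v p, msum v0 p); rewrite !msum_in.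
have := Hdel _ inD; rewrite subr0 Ed mulf_neq0 //; last by lra.
move=> /(_ isT); rewrite normrM (gtr0_norm t0).
have : t * `|beta| <= del / (2 * `|beta|) * `|beta| by rewrite ler_wpM2r // ge_min lexx orbT.
have -> : del / (2 * `|beta|) * `|beta| = del / 2 by field; lra.
lra.
Qed.

End Comb.


Lemma eq_of_close (R : realType) (x y : R) : (forall e, 0 < e -> `|x - y| <= e) -> x = y.
Proof.
move=> H; apply/eqP; rewrite -subr_eq0 -normr_le0.
case: (ltrP 0 `|x - y|) => h //; have := H _ (divr_gt0 h (ltr0Sn _ 1)); lra.
Qed.

Definition clamp (R : realType) (K s : R) := (`|s + K| - `|s - K|) / 2.

Lemma clamp_H (R : realType) (K : R) : 0 < K -> Hset (clamp K).
Proof.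
move=> K0; split; first by rewrite /clamp add0r sub0r normrN subrr mul0r.
move=> x y; rewrite /clamp.
have h1 := ler_dist_dist (x + K) (y + K).
have h2 := ler_dist_dist (x - K) (y - K).
rewrite (_ : x + K - (y + K) = x - y) in h1; last by ring.
rewrite (_ : x - K - (y - K) = x - y) in h2; last by ring.
move: h1 h2; set P := `|x + K|; set Q := `|y + K|; set P' := `|x - K|; set Q' := `|y - K|.
set Z := `|x - y|.
rewrite !ler_norml => /andP[? ?] /andP[? ?]; apply/andP; split; lra.
Qed.

Lemma clamp_id (R : realType) (K s : R) : `|s| <= K -> clamp K s = s.
Proof.
rewrite ler_norml => /andP[h1 h2]; rewrite /clamp ger0_norm; last by lra.
rewrite ler0_norm; last by lra.
lra.
Qed.

Lemma clamp_bnd (R : realType) (K s : R) : 0 < K -> `|clamp K s| <= K.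
Proof.
move=> K0; rewrite /clamp.
have := ler_dist_dist (s + K) (s - K).
rewrite (_ : s + K - (s - K) = 2 * K); last by ring.
rewrite normrM (gtr0_norm K0) (@gtr0_norm _ 2) //.
set P := `|s + K|; set Q := `|s - K|.
rewrite !ler_norml => /andP[? ?]; apply/andP; split; lra.
Qed.

Section Main.
Context (R : realType) (M : Type) (d : M -> M -> R) (x0 : M) (f : M -> M).
Hypothesis Hm : is_metric d.
Hypothesis Hf : Lip0_map d x0 f.

Lemma Hset_comp (phi : M -> R) h : lip_ball d x0 phi -> Hset h -> lip_ball d x0 (fun x => h (phi x)).
Proof.
move=> [[p0 _] Hp] [h0 Hh]; split; first split.
- by rewrite p0 h0.
- by exists 1 => x y; rewrite mul1r (le_trans (Hh _ _)).
- by move=> x y; rewrite (le_trans (Hh _ _)).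
Qed.

Definition decay (w : functional R M) := forall e, 0 < e -> exists N, forall n, (N <= n)%N ->
  forall psi, lip_ball d x0 psi -> `|w (psi \o iter n f)| <= e.

Variables (mu0 : functional R M) (r : R).
Hypothesis Hmu0 : in_free d x0 mu0.
Hypothesis r0 : 0 < r.
Hypothesis Hball : forall nu, in_free d x0 nu -> dnorm d x0 (fsub nu mu0) < r ->
  return_set d x0 (fhat f) nu.

Lemma trunc_zero w : in_free d x0 w -> decay w -> forall phi, lip_ball d x0 phi ->
  forall K, 0 < K -> w (fun x => clamp K (phi x)) = 0.
Proof.
move=> Hw Hdec phi Hphi K K0.
have [lw [Cw HCw]] := free_lin_bnd Hw.
pose Cp := `|Cw| + 1.
have Cp0 : 0 < Cp by rewrite ltr_wpDl.
have HCp : forall psi, lip_ball d x0 psi -> `|w psi| <= Cp.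
  by move=> psi Hp; rewrite (le_trans (HCw _ Hp)) // (le_trans (ler_norm _)) // lerDl.
have r2 : 0 < r / 2 by rewrite divr_gt0.
have [gam [Hsg Hg]] := Hmu0.2 _ r2.
have Hsg' := Hsg; case: Hsg' => s Hs.
have [lmu0 bmu0] := free_lin_bnd Hmu0.
have bg : bnd d x0 (fsub mu0 gam) by rewrite fsubE; apply: bnd_comb => //; exact: span_bnd.
pose a := fun i : 'I_(size s) => (nth (0, x0) s i).1.
pose xs := fun i : 'I_(size s) => (nth (0, x0) s i).2.
have Hgam : forall psi, Lip0 d x0 psi -> gam psi = \sum_i a i * psi (xs i).
  by move=> psi Hp; rewrite Hs // (big_nth (0, x0)) big_mkord.
pose Phi := fun x => clamp K (phi x).
have HPhi : lip_ball d x0 Phi := Hset_comp Hphi (clamp_H K0).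
pose eps := r / (2 * Cp).
have eps0 : 0 < eps by rewrite divr_gt0 // mulr_gt0.
have -> : w Phi = (fun h => w (fun x => h (Phi x))) id by [].
apply: (@core R (size s) a (fun h => gam (fun x => h (Phi x))) (fun h => w (fun x => h (Phi x))) eps eps0).
move=> t t0 teps.
pose rho := fun psi => gam psi + t * w psi.
have Hrho : in_free d x0 rho := free_comb Hm t (span_free Hm Hsg) Hw.
have Hrec : return_set d x0 (fhat f) rho.
  apply: Hball => //.
  apply: (le_lt_trans (y := dnorm d x0 (fsub mu0 gam) + t * Cp)).
    apply: (dnorm_le Hm) => psi Hp; rewrite /fsub /rho.
    rewrite (_ : _ - _ = - (mu0 psi - gam psi) + t * w psi); last by ring.
    rewrite (le_trans (ler_normD _ _)) // normrN lerD // ?(dnorm_ub bg Hp) //.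
    by rewrite normrM ger0_norm // ler_wpM2l // HCp.
  have : t * Cp < eps * Cp by rewrite ltr_pM2r.
  have -> : eps * Cp = r / 2 by rewrite /eps; field; lra.
  lra.
case: Hrec => _ Hlim.
have Hr := einf0_recur Hlim.
have [lrho brho] := free_lin_bnd Hrho.
have Hk : forall k : nat, exists n, forall psi, lip_ball d x0 psi ->
   `|gam (psi \o iter n f) + t * w (psi \o iter n f) - (gam psi + t * w psi)| < k.+1%:R^-1 /\
   `|w (psi \o iter n f)| <= k.+1%:R^-1.
  move=> k; have ek : 0 < k.+1%:R^-1 :> R by rewrite invr_gt0 ltr0Sn.
  have [N HN] := Hdec _ ek.
  have [n [Nn Hn]] := Hr _ ek N.
  exists n => psi Hp; split; last exact: HN.
  have bb : bnd d x0 (fsub (iter n (fhat f) rho) rho).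
    by rewrite fsubE; apply: bnd_comb => //; exact: bnd_iter.
  apply: le_lt_trans Hn; have := dnorm_ub bb Hp; by rewrite /fsub iterT.
have [nk Hnk] := choice Hk.
pose v := fun k => \row_(i < size s) Phi (iter (nk k) f (xs i)).
have Hvb : forall k i, `|v k ord0 i| <= K by move=> k i; rewrite mxE clamp_bnd.
have [p Hp] := cluster_pt Hvb.
exists (fun i => p ord0 i) => h Hh.
pose psi := fun x => h (Phi x).
have Hpsi : lip_ball d x0 psi := Hset_comp HPhi Hh.
apply: eq_of_close => e e0.
pose SA := \sum_i `|a i|.
have SA0 : 0 <= SA by rewrite sumr_ge0.
pose eta := e / 2 / (SA + 1).
have eta0 : 0 < eta by rewrite divr_gt0 // ?ltr_wpDl //; lra.
have [k0 Hk0] := @ltr_add_invr R 0 (e / 2 / (1 + t)) ltac:(rewrite divr_gt0 //; lra).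
have [k [kk Hvk]] := Hp eta eta0 k0.
have [E1 E2] := Hnk k psi Hpsi.
have Hgn : gam (psi \o iter (nk k) f) = \sum_i a i * h (v k ord0 i).
  rewrite Hgam; last by apply: Lip0_iter => //; case: Hpsi.
  by apply: eq_bigr => i _; rewrite mxE.
rewrite Hgn in E1.
have ek : k.+1%:R^-1 <= k0.+1%:R^-1 :> R.
  by rewrite lef_pV2 ?posrE ?ltr0Sn // ler_nat ltnS.
set X := \sum_i a i * h (p ord0 i).
set Y := \sum_i a i * h (v k ord0 i).
have B1 : `|X - Y| <= e / 2.
  rewrite /X /Y -sumrB (le_trans (ler_norm_sum _ _ _)) //.
  apply: (le_trans (y := \sum_i `|a i| * eta)).
    apply: ler_sum => i _; rewrite -mulrBr normrM ler_wpM2l //.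
    by case: Hh => _ Hh; rewrite (le_trans (Hh _ _)) // ltW.
  rewrite -mulr_suml /eta -/SA mulrA ler_pdivrMr ?ltr_wpDl //; last by lra.
have ek0 : (1 + t) * k.+1%:R^-1 < e / 2.
  rewrite add0r ltr_pdivlMr in Hk0; last by lra.
  apply: le_lt_trans Hk0; rewrite mulrC ler_wpM2r //; lra.
move: E1 E2 B1 ek0; set W := w (psi \o iter (nk k) f); set e1 := k.+1%:R^-1.
rewrite (_ : w (fun x => h (Phi x)) = w psi) // (_ : gam (fun x => h (Phi x)) = gam psi) //.
move=> E1 E2 B1 ek0; rewrite -/Y in E1; rewrite mulrDl mul1r in ek0.
have E2' : `|t * W| <= t * e1 by rewrite normrM ger0_norm // ler_wpM2l.
move: E1 E2' B1; rewrite !ler_norml !ltr_norml.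
move=> /andP[? ?] /andP[? ?] /andP[? ?]; apply/andP; split; lra.
Qed.

End Main.


Lemma sum_clamp (R : realType) (M : Type) (phi : M -> R) (s : seq (R * M)) K :
  \sum_(q <- s) `|phi q.2| <= K ->
  \sum_(q <- s) q.1 * clamp K (phi q.2) = \sum_(q <- s) q.1 * phi q.2.
Proof.
elim: s => [|q s IH]; first by rewrite !big_nil.
rewrite !big_cons => H.
have H0 : 0 <= \sum_(q <- s) `|phi q.2| by rewrite sumr_ge0.
have h1 : `|phi q.2| <= K by rewrite (le_trans _ H) // lerDl.
have h2 : \sum_(q <- s) `|phi q.2| <= K.
  by rewrite (le_trans _ H) // lerDr normr_ge0.
by rewrite clamp_id // IH.
Qed.

Section Main2.
Context (R : realType) (M : Type) (d : M -> M -> R) (x0 : M) (f : M -> M).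
Hypothesis Hm : is_metric d.
Hypothesis Hf : Lip0_map d x0 f.
Variables (mu0 : functional R M) (r : R).
Hypothesis Hmu0 : in_free d x0 mu0.
Hypothesis r0 : 0 < r.
Hypothesis Hball : forall nu, in_free d x0 nu -> dnorm d x0 (fsub nu mu0) < r ->
  return_set d x0 (fhat f) nu.

Lemma claimA w : in_free d x0 w -> decay d x0 f w -> forall psi, Lip0 d x0 psi -> w psi = 0.
Proof.
move=> Hw Hdec.
have Hball' : forall phi, lip_ball d x0 phi -> w phi = 0.
  move=> phi Hphi; apply: eq_of_close => e e0; rewrite subr0.
  have e2 : 0 < e / 2 by rewrite divr_gt0.
  have [w' [[s Hs] Hd]] := Hw.2 _ e2.
  pose K := 1 + \sum_(q <- s) `|phi q.2|.
  have K0 : 0 < K by rewrite ltr_wpDr // sumr_ge0.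
  have HZ := trunc_zero Hm Hf Hmu0 r0 Hball Hw Hdec Hphi K0.
  have HPhi : lip_ball d x0 (fun x => clamp K (phi x)) := Hset_comp Hphi (clamp_H K0).
  have E : w' phi = w' (fun x => clamp K (phi x)).
    rewrite !Hs; [|by case: HPhi|by case: Hphi].
    by rewrite sum_clamp // lerDr.
  have [lw bw] := free_lin_bnd Hw.
  have bb : bnd d x0 (fsub w w').
    by rewrite fsubE; apply: bnd_comb => //; apply: span_bnd; exists s.
  have h1 := dnorm_ub bb Hphi; have h2 := dnorm_ub bb HPhi.
  move: h1 h2; rewrite /fsub E HZ sub0r normrN.
  set A := w phi; set B := w' _; set D := dnorm _ _ _.
  move=> h1 h2; have : `|A| <= `|A - B| + `|B|.
    by rewrite (le_trans _ (ler_normD _ _)) // subrK.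
  have : D < e / 2 by [].
  lra.
move=> psi [p0 [L HL]].
pose c := `|L| + 1.
have c0 : 0 < c by rewrite ltr_wpDl.
have Hb : lip_ball d x0 (fun x => c^-1 * psi x).
  have HL' : forall x y, `|psi x - psi y| <= c * d x y.
    move=> x y; rewrite (le_trans (HL x y)) // ler_wpM2r ?(d_ge0 Hm) //.
    by rewrite (le_trans (ler_norm _)) // lerDl.
  split; first split; first by rewrite p0 mulr0.
    by exists 1 => x y; rewrite -mulrBr normrM gtr0_norm ?invr_gt0 // mul1r
      ler_pdivrMl // HL'.
  by move=> x y; rewrite -mulrBr normrM gtr0_norm ?invr_gt0 // ler_pdivrMl // HL'.
have [lw _] := free_lin_bnd Hw.
have := Hball' _ Hb; rewrite (linZ Hm _ lw); last by split => //; exists L.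
move=> /eqP; rewrite mulf_eq0 invr_eq0 => /orP[/eqP|/eqP //]; lra.
Qed.

End Main2.


Unset Implicit Arguments.

Theorem proposition3p15 (R : realType) (M : Type) (d : M -> M -> R) (x0 : M)
    (f : M -> M) :
  is_metric d -> complete_metric d ->
  Lip0_map d x0 f ->
  nonempty_interior d x0 (return_set d x0 (fhat f)) ->
  (~ exists mu : functional R M,
       [/\ in_free d x0 mu, ~ in_span_delta d x0 mu &
           exists nu, in_span_delta d x0 nu /\
             (fun n => dnorm d x0 (fsub (iter n (fhat f) mu) nu)) @ \oo --> (0 : R)])
  /\
  (forall mu nu : functional R M, in_free d x0 mu -> in_free d x0 nu ->
     (forall phi, Lip0 d x0 phi -> fhat f mu phi = fhat f nu phi) ->
     forall phi, Lip0 d x0 phi -> mu phi = nu phi).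
Proof.
move=> Hm _ Hf [mu0 [Hmu0 [r [r0 Hball]]]].
have CA := claimA Hm Hf Hmu0 r0 Hball.
split.
- move=> [mu [Hmu Hns [nu [Hnu Hcv]]]]; apply: Hns.
  have [lmu bmu] := free_lin_bnd Hmu.
  have lnu := span_lin Hnu; have bnu := span_bnd Hnu.
  pose rh n := fsub (iter n (fhat f) mu) nu.
  have brh n : bnd d x0 (rh n).
    by rewrite /rh fsubE; apply: bnd_comb => //; exact: bnd_iter.
  have lrh n : linf d x0 (rh n).
    by rewrite /rh fsubE; apply: lin_comb => //; exact: linf_iter.
  have dn0 n : 0 <= dnorm d x0 (rh n).
    by have := dnorm_ub (brh n) (lip_ball0 x0 Hm); apply: le_trans.
  have Hc : forall e, 0 < e -> exists N, forall n, (N <= n)%N -> dnorm d x0 (rh n) < e.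
    move=> e e0; move/cvgrPdist_lt: Hcv => /(_ e e0) [N _ HN]; exists N => n Nn.
    have := HN n Nn; rewrite sub0r normrN ger0_norm; [by [] | exact: dn0].
  have Hsc : forall chi c, Lip0 d x0 chi -> lipb d chi c -> 0 < c -> forall n,
      `|rh n chi| <= c * dnorm d x0 (rh n).
    move=> chi c Hchi Hl c0 n.
    exact: (scale_bound Hm (lrh n) (fun psi Hp => dnorm_ub (brh n) Hp)).
  have Hfix : forall psi, Lip0 d x0 psi -> nu (psi \o f) = nu psi.
    move=> psi Hpsi; apply: eq_of_close => e e0.
    case: (Hpsi) => p0 [Lp HLp]; have [L [L1 HL]] := iter_lip Hm Hf.
    pose c := (`|Lp| + 1) * L.
    have c1 : 0 < `|Lp| + 1 by rewrite ltr_wpDl.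
    have c0 : 0 < c by rewrite mulr_gt0 // (lt_le_trans ltr01).
    have lc1 : lipb d psi c.
      move=> x y; rewrite (le_trans (HLp x y)) // ler_wpM2r ?(d_ge0 Hm) //.
      rewrite (le_trans (ler_norm _)) // (le_trans (y := `|Lp| + 1)) ?lerDl //.
      by rewrite ler_peMr // ltW.
    have lc2 : lipb d (psi \o f) c.
      move=> x y /=; rewrite (le_trans (HLp _ _)) //.
      rewrite (le_trans (y := (`|Lp| + 1) * d (f x) (f y))) //.
        by rewrite ler_wpM2r ?(d_ge0 Hm) // (le_trans (ler_norm _)) // lerDl.
      rewrite -mulrA; apply: ler_wpM2l; first exact: (ltW c1).
      have := HL 1%N x y; rewrite expr1 => h; exact: h.
    have Lpf : Lip0 d x0 (psi \o f) := Lip0_iter Hm Hf 1 Hpsi.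
    have ec : 0 < e / (2 * c) by rewrite divr_gt0 // mulr_gt0.
    have [N HN] := Hc _ ec.
    have E1 := Hsc psi c Hpsi lc1 c0 N.+1; have E2 := Hsc (psi \o f) c Lpf lc2 c0 N.
    have D1 : c * dnorm d x0 (rh N.+1) <= e / 2.
      rewrite (le_trans (y := c * (e / (2 * c)))) //.
        by rewrite ler_wpM2l ?ltW // HN.
      by rewrite le_eqVlt; apply/orP; left; apply/eqP; field; lra.
    have D2 : c * dnorm d x0 (rh N) <= e / 2.
      rewrite (le_trans (y := c * (e / (2 * c)))) //.
        by rewrite ler_wpM2l ?ltW // HN.
      by rewrite le_eqVlt; apply/orP; left; apply/eqP; field; lra.
    have Eq : nu (psi \o f) - nu psi = rh N.+1 psi - rh N (psi \o f).
      rewrite /rh /fsub !iterT.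
      have -> : (psi \o f) \o iter N f = psi \o iter N.+1 f by [].
      ring.
    rewrite Eq (le_trans (ler_normB _ _)) //; lra.
  have Hfixn : forall n psi, Lip0 d x0 psi -> nu (psi \o iter n f) = nu psi.
    elim => [|n IH] psi Hp; first by [].
    have -> : psi \o iter n.+1 f = (psi \o f) \o iter n f by [].
    by rewrite IH ?Hfix //; exact: (Lip0_iter Hm Hf 1 Hp).
  pose w := fsub mu nu.
  have Hw : in_free d x0 w.
    by rewrite /w fsubE; exact: (free_comb Hm (-1) Hmu (span_free Hm Hnu)).
  have Hdec : decay d x0 f w.
    move=> e e0; have [N HN] := Hc e e0; exists N => n Nn psi Hp.
    rewrite /w /fsub Hfixn; last by case: Hp.
    have e1 : rh n psi = mu (psi \o iter n f) - nu psi by rewrite /rh /fsub iterT.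
    rewrite -e1; apply: ltW; exact: (le_lt_trans (dnorm_ub (brh n) Hp) (HN n Nn)).
  case: Hnu => s Hs; exists s => psi Hp; rewrite -Hs //.
  by apply/eqP; rewrite -subr_eq0; apply/eqP; exact: (CA w Hw Hdec psi Hp).
- move=> mu nu Hmu Hnu Heq psi Hp.
  pose w := fsub mu nu.
  have Hw : in_free d x0 w.
    by rewrite /w fsubE; exact: (free_comb Hm (-1) Hmu Hnu).
  have Hdec : decay d x0 f w.
    move=> e e0; exists 1%N => n Nn psi' Hp'; case: n Nn => // m _.
    have -> : psi' \o iter m.+1 f = (psi' \o iter m f) \o f.
      by apply: funext => x; rewrite /comp -iterSr.
    have := Heq (psi' \o iter m f) (Lip0_iter Hm Hf m (lip_ball_Lip0 Hp')).
    by rewrite /w /fsub /fhat => ->; rewrite subrr normr0 ltW.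
  by apply/eqP; rewrite -subr_eq0; apply/eqP; exact: (CA w Hw Hdec psi Hp).
Qed.
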